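(* The $R$-linear map $\kappa:V^*\to V^{\otimes n-1}$ defined by \[ v_i^*\mapsto (-q)^i\sum_{w\in\mathfrak S_{n-1}}(-q)^{l(w)}v_{(1,2,\ldots,\hat i,\ldots,n).w}\qquad(1\le i\le n) \] is a well-defined monomorphism of $\mathbf U'$-modules. (Here $(1,\ldots,\hat i,\ldots,n)$ is the multi-index of length $n-1$ obtained by omitting $i$.)
   Context: $R$ commutative ring with $1$, $q\in R$ invertible, $n\ge 1$. $\mathbf U'$ is the $R$-form (obtained by base change $\mathbb Z[q,q^{-1}]\to R$, $q\mapsto q$) of the $\mathbb Z[q,q^{-1}]$-subalgebra of $U_q(\mathfrak{gl}_n)$ generated by the $K_i=q^{h_i-h_{i+1}}$ and the divided powers $e_i^{(l)}=e_i^l/[l]_q!$, $f_i^{(l)}=f_i^l/[l]_q!$ ($1\le i\le n-1$, $l\ge 0$, $[l]_q=\sum_{t=0}^{l-1}q^{2t-l+1}$); it is a sub-Hopf algebra of the analogous $R$-form $\mathbf U$ of $U_q(\mathfrak{gl}_n)$, with $\Delta(K_i)=K_i\otimes K_i$, $\Delta(e_i)=e_i\otimes K_i^{-1}+1\otimes e_i$, $\Delta(f_i)=f_i\otimes 1+K_i\otimes f_i$, $S(K_i)=K_i^{-1}$, $S(e_i)=-e_iK_i$, $S(f_i)=-K_i^{-1}f_i$. $V=R^n$ with basis $v_1,\dots,v_n$: $K_iv_j=q^{\delta_{ij}-\delta_{i+1,j}}v_j$, $e_iv_{i+1}=v_i$, $e_iv_j=0$ for $j\ne i+1$, $f_iv_i=v_{i+1}$,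 $f_iv_j=0$ for $j\neq i$, and $e_i^{(l)},f_i^{(l)}$ act as $0$ for $l\ge2$. $\mathbf U'$ acts on tensor powers via $\Delta$ and on $V^*=\mathrm{Hom}_R(V,R)$ (dual basis $v_1^*,\dots,v_n^*$) by $(xf)(w)=f(S(x)w)$. For a multi-index $\mathbf i=(i_1,\dots,i_m)$, $v_{\mathbf i}=v_{i_1}\otimes\cdots\otimes v_{i_m}$; $\mathfrak S_m$ acts on multi-indices on the right by place permutations ($\mathbf i.s_t$ swaps the entries in positions $t,t+1$); $l(w)$ is the Coxeter length. *)

(* Defs.v *)
From HB Require Import structures.
From mathcomp Require Import all_boot all_order all_algebra all_fingroup.
Set Implicit Arguments. Unset Strict Implicit. Unset Printing Implicit Defensive.
Import Order.TTheory GRing.Theory Num.Theory.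
Local Open Scope ring_scope.

(* Conventions: indices are zero-based.  Basis vector v_{k+1}
   of the paper is the ordinal k : 'I_n; the generator e_{i+1},f_{i+1},K_{i+1}
   of the paper is indexed by i : 'I_n with i.+1 < n.  Elements of V (and of
   V^* = Hom_R(V,R), via phi |-> (k |-> phi(v_k))) are coordinate vectors
   {ffun 'I_n -> R}; elements of V^{(x) m} are coordinate functions on
   multi-indices {ffun m.-tuple 'I_n -> R}. *)

Definition scf (R : comUnitRingType) (T : finType) (c : R) (f : {ffun T -> R})
  : {ffun T -> R} := [ffun x => c * f x].
Notation "c *:: f" := (scf c f) (at level 40).

Section QuantumGL.
Variable R : comUnitRingType.
Variable q : R.
Variable n : nat.

Local Notation vec := {ffun 'I_n -> R}.
Local Notation tensor m := {ffun m.-tuple 'I_n -> R}.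

(* weight: K_i v_k = q^(hwt i k) v_k *)
Definition hwt (i k : 'I_n) : int :=
  (nat_of_bool (val k == val i))%:Z - (nat_of_bool (val k == (val i).+1))%:Z.

(* the ordinal i+1 (meaningful when i.+1 < n) *)
Definition up (i : 'I_n) : 'I_n := insubd i (val i).+1.

Definition vbasis (k : 'I_n) : vec := [ffun k' => (k' == k)%:R].

Definition vK (i : 'I_n) (z : int) (v : vec) : vec :=
  [ffun k => exprz q (z * hwt i k) * v k].
Definition vE (i : 'I_n) (v : vec) : vec :=
  [ffun k => if val k == val i then v (up i) else 0].
Definition vF (i : 'I_n) (v : vec) : vec :=
  [ffun k => if val k == (val i).+1 then v i else 0].

(* action on V of the antipodes S(e_i^(l)), S(f_i^(l)):
   S(e_i^(0)) = S(f_i^(0)) = 1, S(e_i) = - e_i K_i, S(f_i) = - K_i^-1 f_i,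
   and for l >= 2, S(e_i^(l)) (resp. S(f_i^(l))) is a unit multiple of
   e_i^(l) K_i^l (resp. K_i^-l f_i^(l)), which acts as 0 on V. *)
Definition vSE (i : 'I_n) (l : nat) (v : vec) : vec :=
  match l with 0 => v | 1 => - vE i (vK i 1 v) | _ => 0 end.
Definition vSF (i : 'I_n) (l : nat) (v : vec) : vec :=
  match l with 0 => v | 1 => - vK i (-1) (vF i v) | _ => 0 end.

(* dual module: (x phi)(w) = phi(S(x) w) *)
Definition pairing (phi v : vec) : R := \sum_k phi k * v k.
Definition dualize (S : vec -> vec) (phi : vec) : vec :=
  [ffun k => pairing phi (S (vbasis k))].
Definition dK (i : 'I_n) (z : int) := dualize (vK i (- z)).
Definition dE (i : 'I_n) (l : nat) := dualize (vSE i l).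
Definition dF (i : 'I_n) (l : nat) := dualize (vSF i l).

Definition tbasis (m : nat) (j : m.-tuple 'I_n) : tensor m :=
  [ffun j' => (j' == j)%:R].
Definition wt (m : nat) (i : 'I_n) (j : m.-tuple 'I_n) : int :=
  \sum_(p < m) hwt i (tnth j p).
Definition replace (m : nat) (j : m.-tuple 'I_n) (S : {set 'I_m}) (k : 'I_n)
  : m.-tuple 'I_n := [tuple if p \in S then k else tnth j p | p < m].

(* K_i^z acts diagonally (Delta(K) = K (x) K) *)
Definition tK (m : nat) (i : 'I_n) (z : int) (t : tensor m) : tensor m :=
  [ffun j => exprz q (z * wt i j) * t j].

(* e_i^(l) on a basis tensor v_j, obtained from the iterated coproduct of
   Delta(e) = e (x) K^-1 + 1 (x) e (divided by [l]!): sum over the l-sets S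
   of positions carrying v_{i+1}, each changed to v_i, with coefficient
   q^(- sum_{p in S} sum_{r > p, r notin S} hwt i j_r). *)
Definition tE_basis (m : nat) (i : 'I_n) (l : nat) (j : m.-tuple 'I_n)
  : tensor m :=
  \sum_(S : {set 'I_m} | (#|S| == l) &&
                          [forall p in S, val (tnth j p) == (val i).+1])
     exprz q (- \sum_(p in S) \sum_(r : 'I_m | (val p < val r)%N && (r \notin S))
               hwt i (tnth j r)) *:: tbasis (replace j S i).
(* f_i^(l) likewise, from Delta(f) = f (x) 1 + K (x) f *)
Definition tF_basis (m : nat) (i : 'I_n) (l : nat) (j : m.-tuple 'I_n)
  : tensor m :=
  \sum_(S : {set 'I_m} | (#|S| == l) &&
                          [forall p in S, val (tnth j p) == val i])
     exprz q (\sum_(p in S) \sum_(r : 'I_m | (val r < val p)%N && (r \notin S))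
               hwt i (tnth j r)) *:: tbasis (replace j S (up i)).

Definition tE (m : nat) (i : 'I_n) (l : nat) (t : tensor m) : tensor m :=
  \sum_j t j *:: tE_basis i l j.
Definition tF (m : nat) (i : 'I_n) (l : nat) (t : tensor m) : tensor m :=
  \sum_j t j *:: tF_basis i l j.

Definition is_Uprime_hom (m : nat) (g : vec -> tensor m) : Prop :=
  forall i : 'I_n, ((val i).+1 < n)%N ->
    [/\ forall (z : int) (phi : vec), g (dK i z phi) = tK i z (g phi),
        forall (l : nat) (phi : vec), g (dE i l phi) = tE i l (g phi) &
        forall (l : nat) (phi : vec), g (dF i l phi) = tF i l (g phi)].

Definition omit (k : 'I_n) : (n.-1).-tuple 'I_n := [tuple lift k p | p < n.-1].
(* right action by place permutations: (j.w)_p = j_{w(p)} *)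
Definition place (m : nat) (j : m.-tuple 'I_n) (w : 'S_m) : m.-tuple 'I_n :=
  [tuple tnth j (w p) | p < m].
Definition coxeter_length (m : nat) (w : 'S_m) : nat :=
  #|[set pr : 'I_m * 'I_m | (val pr.1 < val pr.2)%N && (val (w pr.2) < val (w pr.1))%N]|.

(* kappa applied to the dual basis vector v_k^* ; k zero-based, i.e. paper's i = k+1 *)
Definition kappa_basis (k : 'I_n) : tensor n.-1 :=
  (- q) ^+ (val k).+1 *::
    \sum_(w : 'S_(n.-1)) ((- q) ^+ coxeter_length w *:: tbasis (place (omit k) w)).
Definition kappa (phi : vec) : tensor n.-1 := \sum_k phi k *:: kappa_basis k.

End QuantumGL.

Notation vec R n := {ffun 'I_n -> R}.
Notation tensor R n m := {ffun m.-tuple 'I_n -> R}.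

(* Main.v *)
Require Import Defs.
From HB Require Import structures.
From mathcomp Require Import all_boot all_order all_algebra all_fingroup.
From mathcomp Require Import ring zify.
Set Implicit Arguments. Unset Strict Implicit. Unset Printing Implicit Defensive.
Import Order.TTheory GRing.Theory Num.Theory.
Local Open Scope ring_scope.


Definition invs m (w : 'S_m) :=
 [set pr : 'I_m * 'I_m | (val pr.1 < val pr.2)%N && (val (w pr.2) < val (w pr.1))%N].

Lemma tperm_val m (a b u : 'I_m) : val (tperm a b u) =
  if val u == val a then val b else if val u == val b then val a else val u.
Proof. rewrite !val_eqE; case: tpermP => [->|->|na nb]; rewrite ?eqxx //.
  by case: eqP => // ->. by do 2 case: eqP => //. Qed.

Lemma ordeq m (u v : 'I_m) : (u == v) = (val u == val v). Proof. by []. Qed.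

Lemma key_nat (a b c d x y u v : nat) : b = a.+1 -> (x < y)%N ->
  (c == x) = (u == a) -> (d == y) = (v == b) -> (c == y) = (u == b) ->
  (d == x) = (v == a) -> (u == v) = (c == d) ->
  (c < d)%N &&
  ((if v == a then b else if v == b then a else v) <
   (if u == a then b else if u == b then a else u))%N =
  (c == x) && (d == y) || (c < d)%N && (v < u)%N.
Proof.
move=> hab hxy h2 h3 h4 h5 h6; rewrite h2 h3.
case: (u =P a) h2 h4 => [ua|ua] h2 h4; case: (v =P a) h5 h6 => [va|va] h5 h6;
  case: (u =P b) h4 => [ub|ub] h4; case: (v =P b) h3 => [vb|vb] h3;
  move: h2 h3 h4 h5 h6 => /eqP h2 /eqP h3 /eqP h4 /eqP h5 /eqP h6 /=; lia.
Qed.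

Lemma len_tperm m (a b : 'I_m) (w : 'S_m) : val b = (val a).+1 ->
  (val ((w^-1)%g a) < val ((w^-1)%g b))%N ->
  #|invs (w * tperm a b)%g| = (#|invs w|).+1.
Proof.
move=> hab hxy.
have -> : invs (w * tperm a b)%g = ((w^-1)%g a, (w^-1)%g b) |: invs w.
  apply/setP => -[c d]; rewrite !inE /= !permM xpair_eqE.
  have ec : (c == (w^-1)%g a) = (w c == a) by apply/eqP/eqP => [->|<-]; rewrite ?permKV ?permK.
  have ed : (d == (w^-1)%g b) = (w d == b) by apply/eqP/eqP => [->|<-]; rewrite ?permKV ?permK.
  have ec' : (c == (w^-1)%g b) = (w c == b) by apply/eqP/eqP => [->|<-]; rewrite ?permKV ?permK.
  have ed' : (d == (w^-1)%g a) = (w d == a) by apply/eqP/eqP => [->|<-]; rewrite ?permKV ?permK.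
  have huv : (w c == w d) = (c == d) by rewrite (inj_eq (@perm_inj _ w)).
  move: hxy ec ed ec' ed' huv.
  move: ((w^-1)%g a) ((w^-1)%g b) (w c) (w d) => x y u v.
  rewrite !tperm_val => h1 h2 h3 h4 h5 h6.
  exact: (key_nat hab h1 h2 h3 h4 h5 h6).
rewrite cardsU1 inE /= !permKV.
have -> : (b < a)%N = false by move: hab => /= hab; lia.
by rewrite andbF.
Qed.

Lemma valE m (x : 'I_m) : val x = nat_of_ord x. Proof. by []. Qed.
Ltac nlia := rewrite ?valE; lia.

Section Pf.
Variable R : comUnitRingType.
Variable q : R.
Variable n : nat.
Hypothesis Hq : q \is a GRing.unit.

Local Notation vec := {ffun 'I_n -> R}.
Local Notation tensor m := {ffun m.-tuple 'I_n -> R}.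

Lemma scfE (T : finType) c (f : {ffun T -> R}) x : (c *:: f) x = c * f x.
Proof. by rewrite ffunE. Qed.

Lemma tbasisE m (j x : m.-tuple 'I_n) : tbasis R x j = (j == x)%:R.
Proof. by rewrite ffunE. Qed.

Lemma tnth_omit (k : 'I_n) p : tnth (omit k) p = lift k p.
Proof. by rewrite tnth_mktuple. Qed.

Lemma tnth_place m (j : m.-tuple 'I_n) w p : tnth (place j w) p = tnth j (w p).
Proof. by rewrite tnth_mktuple. Qed.

Lemma tnth_replace m (j : m.-tuple 'I_n) S k p :
  tnth (replace j S k) p = if p \in S then k else tnth j p.
Proof. by rewrite tnth_mktuple. Qed.

Lemma kappaE (phi : vec) (x : (n.-1).-tuple 'I_n) :
  kappa q phi x = \sum_k \sum_(w : 'S_(n.-1))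
     phi k * ((- q) ^+ (val k).+1 * ((- q) ^+ coxeter_length w *
        (x == place (omit k) w)%:R)).
Proof.
rewrite sum_ffunE; apply: eq_bigr => k _.
rewrite scfE /kappa_basis scfE sum_ffunE mulr_sumr mulr_sumr.
by apply: eq_bigr => w _; rewrite scfE tbasisE.
Qed.

Lemma kappa_lin a (phi psi : vec) :
  kappa q (a *:: phi + psi) = a *:: kappa q phi + kappa q psi.
Proof.
apply/ffunP => x; rewrite !ffunE !kappaE mulr_sumr -big_split /=.
apply: eq_bigr => k _; rewrite mulr_sumr -big_split /=.
by apply: eq_bigr => w _; rewrite !ffunE; ring.
Qed.

Lemma place_omit_eq (k k' : 'I_n) (w : 'S_(n.-1)) :
  (omit k == place (omit k') w) = (k == k') && (w == 1%g).
Proof.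
apply/eqP/andP => [E|[/eqP-> /eqP->]]; last first.
  by apply: eq_from_tnth => p; rewrite tnth_place perm1.
have kk : k = k'.
  apply/eqP; apply/negPn/negP => nk.
  case: (unliftP k k') => [a ea|ek]; last by rewrite ek eqxx in nk.
  have := congr1 (fun t => tnth t a) E; rewrite /= tnth_place !tnth_omit -ea.
  by move=> e; have := neq_lift k' (w a); rewrite -e eqxx.
subst k'; split => //; apply/eqP/permP => p; rewrite perm1.
have := congr1 (fun t => tnth t p) E; rewrite /= tnth_place !tnth_omit.
by move/lift_inj.
Qed.

Lemma len1 m : coxeter_length (1%g : 'S_m) = 0%N.
Proof.
apply/eqP; rewrite cards_eq0; apply/eqP/setP => -[a b].
rewrite !inE /= !perm1; apply/negbTE; apply/negP => /andP[h1 h2]; move: (ltn_trans h1 h2); by rewrite ltnn.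
Qed.


Lemma kappa_at_omit (phi : vec) (k : 'I_n) :
  kappa q phi (omit k) = phi k * (- q) ^+ (val k).+1.
Proof.
rewrite kappaE (bigD1 k) //= [X in _ + X]big1 ?addr0; last first.
  move=> k' nk; apply: big1 => w _; rewrite place_omit_eq eq_sym (negbTE nk).
  by rewrite !mulr0.
rewrite (bigD1 1%g) //= [X in _ + X]big1 ?addr0; last first.
  by move=> w nw; rewrite place_omit_eq eqxx (negbTE nw) !mulr0.
by rewrite place_omit_eq !eqxx len1 expr0 !mulr1.
Qed.

Lemma kappa_inj : injective (kappa q (n:=n)).
Proof.
move=> phi psi E; apply/ffunP => k.
have := congr1 (fun t : tensor n.-1 => t (omit k)) E; rewrite /= !kappa_at_omit.
by apply: mulIr; rewrite unitrX // unitrN.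
Qed.


Lemma sum_ind (c : nat) : (c < n)%N ->
  \sum_(x : 'I_n) (nat_of_bool (val x == c))%:Z = 1.
Proof.
move=> hc; rewrite (bigD1 (Ordinal hc)) //= eqxx big1 ?addr0 // => x nx.
case: eqP => // ex; case/eqP: nx; exact: val_inj.
Qed.

Lemma sum_hwt (i : 'I_n) : ((val i).+1 < n)%N -> \sum_x hwt i x = 0.
Proof.
move=> hi; rewrite /hwt sumrB sum_ind ?sum_ind ?subrr //; exact: ltnW.
Qed.

Lemma wt_place (i k : 'I_n) (w : 'S_(n.-1)) : ((val i).+1 < n)%N ->
  wt i (place (omit k) w) = - hwt i k.
Proof.
move=> hi; rewrite /wt.
have -> : \sum_(p < n.-1) hwt i (tnth (place (omit k) w) p) =
          \sum_(p < n.-1) hwt i (lift k p).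
  rewrite (reindex_inj (@perm_inj _ w^-1)) /=.
  by apply: eq_bigr => p _; rewrite tnth_place tnth_omit permKV.
have := sum_hwt hi; rewrite (bigD1_ord k) //= => /eqP.
by rewrite addr_eq0 => /eqP ->; rewrite opprK.
Qed.

Lemma dKE (i : 'I_n) z (phi : vec) k : dK q i z phi k = phi k * exprz q (- z * hwt i k).
Proof.
rewrite ffunE /pairing (bigD1 k) //= big1 ?addr0.
  by rewrite !ffunE eqxx mulr1.
by move=> k' nk; rewrite !ffunE (negbTE nk) !mulr0.
Qed.

Lemma hom_K (i : 'I_n) z (phi : vec) : ((val i).+1 < n)%N ->
  kappa q (dK q i z phi) = tK q i z (kappa q phi).
Proof.
move=> hi; apply/ffunP => x; rewrite ffunE !kappaE mulr_sumr.
apply: eq_bigr => k _; rewrite mulr_sumr; apply: eq_bigr => w _.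
rewrite dKE; case: eqP => [->|_]; last by rewrite !mulr0.
rewrite wt_place // mulrN mulNr; ring.
Qed.


Section Basis.
Variable m : nat.
Variable i : 'I_n.

Lemma tE_basis0 (j : m.-tuple 'I_n) : tE_basis q i 0 j = tbasis R j.
Proof.
rewrite /tE_basis (big_pred1 set0); last first.
  move=> S; rewrite /= cards_eq0; case: eqP => [->|] //=.
  by apply/forall_inP => p; rewrite inE.
rewrite big_set0 oppr0 expr0z.
have -> : replace j set0 i = j by apply: eq_from_tnth => p; rewrite tnth_replace inE.
by apply/ffunP => x; rewrite !ffunE mul1r.
Qed.

Lemma tF_basis0 (j : m.-tuple 'I_n) : tF_basis q i 0 j = tbasis R j.
Proof.
rewrite /tF_basis (big_pred1 set0); last first.
  move=> S; rewrite /= cards_eq0; case: eqP => [->|] //=.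
  by apply/forall_inP => p; rewrite inE.
rewrite big_set0 expr0z.
have -> : replace j set0 (up i) = j by apply: eq_from_tnth => p; rewrite tnth_replace inE.
by apply/ffunP => x; rewrite !ffunE mul1r.
Qed.

Lemma tE_basis_none l (j : m.-tuple 'I_n) : (0 < l)%N ->
  (forall p, val (tnth j p) != (val i).+1) -> tE_basis q i l j = 0.
Proof.
move=> l0 hj; rewrite /tE_basis big_pred0 // => S.
apply/negbTE/negP => /andP[/eqP cS /forall_inP hS].
have : (0 < #|S|)%N by rewrite cS.
by case/card_gt0P => p /hS; rewrite (negbTE (hj p)).
Qed.

Lemma tF_basis_none l (j : m.-tuple 'I_n) : (0 < l)%N ->
  (forall p, val (tnth j p) != val i) -> tF_basis q i l j = 0.
Proof.
move=> l0 hj; rewrite /tF_basis big_pred0 // => S.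
apply/negbTE/negP => /andP[/eqP cS /forall_inP hS].
have : (0 < #|S|)%N by rewrite cS.
by case/card_gt0P => p /hS; rewrite (negbTE (hj p)).
Qed.

Lemma tE_basis_ge2 l (j : m.-tuple 'I_n) : (1 < l)%N ->
  injective (tnth j) -> tE_basis q i l j = 0.
Proof.
move=> l1 hj; rewrite /tE_basis big_pred0 // => S.
apply/negbTE/negP => /andP[/eqP cS /forall_inP hS].
have : (1 < #|S|)%N by rewrite cS.
case/card_gt1P => x [y [xS yS nxy]]; move: (hS _ xS) (hS _ yS) => /eqP ex /eqP ey.
by case/eqP: nxy; apply: hj; apply: val_inj; rewrite ex ey.
Qed.

Lemma tF_basis_ge2 l (j : m.-tuple 'I_n) : (1 < l)%N ->
  injective (tnth j) -> tF_basis q i l j = 0.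
Proof.
move=> l1 hj; rewrite /tF_basis big_pred0 // => S.
apply/negbTE/negP => /andP[/eqP cS /forall_inP hS].
have : (1 < #|S|)%N by rewrite cS.
case/card_gt1P => x [y [xS yS nxy]]; move: (hS _ xS) (hS _ yS) => /eqP ex /eqP ey.
by case/eqP: nxy; apply: hj; apply: val_inj; rewrite ex ey.
Qed.

Lemma tE_basis1 (j : m.-tuple 'I_n) p : injective (tnth j) ->
  val (tnth j p) = (val i).+1 ->
  tE_basis q i 1 j = exprz q (- \sum_(r : 'I_m | (val p < val r)%N && (r \notin [set p]))
               hwt i (tnth j r)) *:: tbasis R (replace j [set p] i).
Proof.
move=> hj hp; rewrite /tE_basis (big_pred1 [set p]) ?big_set1 // => S /=.
apply/andP/eqP => [[/cards1P[x ->] /forall_inP hS]|->]; last first.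
  split; first by rewrite cards1.
  by apply/forall_inP => r /set1P ->; rewrite hp.
congr [set _]; apply: hj; apply: val_inj; rewrite hp.
by apply/eqP; apply: hS; rewrite set11.
Qed.

Lemma tF_basis1 (j : m.-tuple 'I_n) p : injective (tnth j) ->
  val (tnth j p) = val i ->
  tF_basis q i 1 j = exprz q (\sum_(r : 'I_m | (val r < val p)%N && (r \notin [set p]))
               hwt i (tnth j r)) *:: tbasis R (replace j [set p] (up i)).
Proof.
move=> hj hp; rewrite /tF_basis (big_pred1 [set p]) ?big_set1 // => S /=.
apply/andP/eqP => [[/cards1P[x ->] /forall_inP hS]|->]; last first.
  split; first by rewrite cards1.
  by apply/forall_inP => r /set1P ->; rewrite hp.
congr [set _]; apply: hj; apply: val_inj; rewrite hp.
by apply/eqP; apply: hS; rewrite set11.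
Qed.

End Basis.


Lemma lin_kappa (B : (n.-1).-tuple 'I_n -> tensor n.-1) (phi : vec) :
  \sum_j kappa q phi j *:: B j =
  \sum_k \sum_(w : 'S_(n.-1)) (phi k * ((- q) ^+ (val k).+1 * (- q) ^+ coxeter_length w))
      *:: B (place (omit k) w).
Proof.
apply/ffunP => y; rewrite !sum_ffunE.
under eq_bigr do rewrite scfE kappaE mulr_suml.
rewrite exchange_big; apply: eq_bigr => k _; rewrite sum_ffunE.
under eq_bigr do rewrite mulr_suml.
rewrite exchange_big; apply: eq_bigr => w _.
rewrite (bigD1 (place (omit k) w)) //= [X in _ + X]big1 ?addr0.
  by rewrite eqxx scfE mulr1.
by move=> j /negbTE ->; rewrite !mulr0 mul0r.
Qed.

Lemma inj_place (k : 'I_n) (w : 'S_(n.-1)) : injective (tnth (place (omit k) w)).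
Proof.
by move=> x y; rewrite !tnth_place !tnth_omit => /lift_inj /perm_inj.
Qed.

Lemma tbasis_sum m (t : tensor m) : \sum_j t j *:: tbasis R j = t.
Proof.
apply/ffunP => x; rewrite sum_ffunE (bigD1 x) //= [X in _ + X]big1 ?addr0.
  by rewrite scfE tbasisE eqxx mulr1.
by move=> j nj; rewrite scfE tbasisE eq_sym (negbTE nj) mulr0.
Qed.

Lemma kappa0 : kappa q (0 : vec) = 0.
Proof.
by apply/ffunP => x; rewrite kappaE ffunE big1 // => k _; rewrite big1 // => w _; rewrite ffunE mul0r.
Qed.

Lemma dual_id (phi : vec) : dualize id phi = phi.
Proof.
apply/ffunP => k; rewrite ffunE /pairing (bigD1 k) //= big1 ?addr0.
  by rewrite ffunE eqxx mulr1.
by move=> k' nk; rewrite ffunE (negbTE nk) mulr0.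
Qed.

Lemma dual_zero (phi : vec) : dualize (fun _ => 0) phi = 0.
Proof.
by apply/ffunP => k; rewrite !ffunE /pairing big1 // => k' _; rewrite ffunE mulr0.
Qed.

Section Hom.
Variable i : 'I_n.
Hypothesis hi : ((val i).+1 < n)%N.

Lemma hom_E0 (phi : vec) : kappa q (dE q i 0 phi) = tE q i 0 (kappa q phi).
Proof.
rewrite /dE /tE.
under [RHS]eq_bigr do rewrite tE_basis0.
by rewrite tbasis_sum; congr (kappa q _); exact: dual_id.
Qed.

Lemma hom_F0 (phi : vec) : kappa q (dF q i 0 phi) = tF q i 0 (kappa q phi).
Proof.
rewrite /dF /tF.
under [RHS]eq_bigr do rewrite tF_basis0.
by rewrite tbasis_sum; congr (kappa q _); exact: dual_id.
Qed.

Lemma hom_E2 l (phi : vec) : (1 < l)%N -> kappa q (dE q i l phi) = tE q i l (kappa q phi).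
Proof.
case: l => [|[|l]] // _.
rewrite /dE /tE lin_kappa big1 ?dual_zero ?kappa0 // => k _.
rewrite big1 // => w _; rewrite tE_basis_ge2 //; last exact: inj_place.
by apply/ffunP => x; rewrite !ffunE mulr0.
Qed.

Lemma hom_F2 l (phi : vec) : (1 < l)%N -> kappa q (dF q i l phi) = tF q i l (kappa q phi).
Proof.
case: l => [|[|l]] // _.
rewrite /dF /tF lin_kappa big1 ?dual_zero ?kappa0 // => k _.
rewrite big1 // => w _; rewrite tF_basis_ge2 //; last exact: inj_place.
by apply/ffunP => x; rewrite !ffunE mulr0.
Qed.

Lemma val_up : val (up i) = (val i).+1.
Proof. by rewrite val_insubd hi. Qed.

Lemma up_neq : up i != i.
Proof. apply/negP => /eqP /(congr1 val); rewrite val_up /= => e; nlia. Qed.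

Lemma vlift (h : 'I_n) (y : 'I_n.-1) : val (lift h y) = bump h y.
Proof. by []. Qed.

Lemma sum_delta m (P : pred 'I_m) (x : 'I_m) :
  \sum_(r | P r) (nat_of_bool (r == x))%:Z = (nat_of_bool (P x))%:Z.
Proof.
case Px: (P x).
  rewrite (bigD1 x) //= eqxx big1 ?addr0 // => r /andP[_ /negbTE ->] //.
by rewrite big1 // => r Pr; case: eqP => // e; move: Pr; rewrite e Px.
Qed.

Lemma Ek_i (w : 'S_(n.-1)) :
  tE_basis q i 1 (place (omit i) w) = tbasis R (place (omit (up i)) w).
Proof.
case: (unliftP i (up i)) => [b0 eb|e]; last by move: up_neq; rewrite e eqxx.
have vb0 : val b0 = val i.
  move: (congr1 val eb); rewrite val_up vlift /bump; nlia.
rewrite (@tE_basis1 _ _ _ ((w^-1)%g b0)); first last.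
- by rewrite tnth_place tnth_omit permKV -eb val_up.
- exact: inj_place.
rewrite big1 ?oppr0 ?expr0z; last first.
  move=> r /andP[_]; rewrite in_set1 => nr.
  rewrite /hwt tnth_place tnth_omit vlift /bump.
  have nb : val (w r) != val b0.
    apply: contra nr => /eqP /val_inj <-; by rewrite permK.
  case: eqP => e1; first by move: e1; nlia.
  by case: eqP => e2 //; move: e2 nb; rewrite vb0; nlia.
have -> : replace (place (omit i) w) [set (w^-1)%g b0] i = place (omit (up i)) w.
  apply: eq_from_tnth => r; rewrite tnth_replace in_set1 !tnth_place !tnth_omit.
  case: eqP => [->|nr]; rewrite ?permKV.
    by apply: val_inj; rewrite vlift /bump val_up vb0; nlia.
  have nb : val (w r) != val b0.
    apply/negP => /eqP /val_inj e; apply: nr; by rewrite -e permK.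
  by apply: val_inj; rewrite !vlift /bump val_up; move: nb; rewrite vb0; nlia.
by apply/ffunP => x; rewrite !ffunE mul1r.
Qed.

Lemma Fk_up (w : 'S_(n.-1)) :
  tF_basis q i 1 (place (omit (up i)) w) = tbasis R (place (omit i) w).
Proof.
case: (unliftP (up i) i) => [a0 ea|e]; last by move: up_neq; rewrite -e eqxx.
have va0 : val a0 = val i by move: (congr1 val ea); rewrite vlift /bump val_up; nlia.
rewrite (@tF_basis1 _ _ _ ((w^-1)%g a0)); first last.
- by rewrite tnth_place tnth_omit permKV -ea.
- exact: inj_place.
rewrite big1 ?expr0z; last first.
  move=> r /andP[_]; rewrite in_set1 => nr.
  rewrite /hwt tnth_place tnth_omit vlift /bump val_up.
  have nb : val (w r) != val a0.
    apply: contra nr => /eqP /val_inj <-; by rewrite permK.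
  case: eqP => e1; first by move: e1 nb; rewrite va0; nlia.
  by case: eqP => e2 //; move: e2; nlia.
have -> : replace (place (omit (up i)) w) [set (w^-1)%g a0] (up i) = place (omit i) w.
  apply: eq_from_tnth => r; rewrite tnth_replace in_set1 !tnth_place !tnth_omit.
  case: eqP => [->|nr]; rewrite ?permKV.
    by apply: val_inj; rewrite vlift /bump val_up va0; nlia.
  have nb : val (w r) != val a0.
    apply/negP => /eqP /val_inj e; apply: nr; by rewrite -e permK.
  by apply: val_inj; rewrite !vlift /bump val_up; move: nb; rewrite va0; nlia.
by apply/ffunP => x; rewrite !ffunE mul1r.
Qed.

Lemma Ek_up (w : 'S_(n.-1)) : tE_basis q i 1 (place (omit (up i)) w) = 0.
Proof.
apply: tE_basis_none => // p; rewrite tnth_place tnth_omit -val_up.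
by apply/negP => /eqP /val_inj e; move: (neq_lift (up i) (w p)); rewrite e eqxx.
Qed.

Lemma Fk_i (w : 'S_(n.-1)) : tF_basis q i 1 (place (omit i) w) = 0.
Proof.
apply: tF_basis_none => // p; rewrite tnth_place tnth_omit.
by apply/negP => /eqP /val_inj e; move: (neq_lift i (w p)); rewrite e eqxx.
Qed.

End Hom.

Lemma inv_ws m (a b : 'I_m) (w : 'S_m) :
  ((w * tperm a b)^-1)%g a = (w^-1)%g b /\ ((w * tperm a b)^-1)%g b = (w^-1)%g a.
Proof. by rewrite invMg tpermV !permM tpermL tpermR. Qed.

Lemma cancel_sum m (a b : 'I_m) (T : finType) (G : 'S_m -> {ffun T -> R}) :
  val b = (val a).+1 -> (forall w, G (w * tperm a b)%g = G w) ->
  \sum_(w : 'S_m) ((- q) ^+ coxeter_length w *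
     exprz q (- (nat_of_bool (val ((w^-1)%g b) < val ((w^-1)%g a))%N)%:Z)) *:: G w = 0.
Proof.
move=> hab hG.
rewrite (bigID (fun w : 'S_m => (val ((w^-1)%g a) < val ((w^-1)%g b))%N)) /=.
rewrite [X in _ + X](reindex_inj (mulIg (tperm a b))) /=.
have ne : forall w : 'S_m, val ((w^-1)%g a) != val ((w^-1)%g b).
  move=> w; apply/negP => /eqP /val_inj /perm_inj e.
  by move: hab; rewrite e => /n_Sn.
rewrite [X in _ + X](eq_bigl (fun w : 'S_m => (val ((w^-1)%g a) < val ((w^-1)%g b))%N)); last first.
  move=> w; case: (inv_ws a b w) => -> ->; move: (ne w).
  by case: ltngtP.
rewrite -big_split big1 //= => w hw.
case: (inv_ws a b w) => -> ->; rewrite hG hw ltnNge (ltnW hw) /=.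
rewrite /coxeter_length len_tperm //.
apply/ffunP => x; rewrite !ffunE expr0z mulr1 exprN1 exprS.
have hqq : q * q^-1 = 1 by rewrite mulrV.
rewrite -/(invs w).
have -> : - q * (- q) ^+ #|invs w| / q * G w x = - ((- q) ^+ #|invs w| * G w x * (q * q^-1)) by ring.
by rewrite hqq mulr1 subrr.
Qed.

Section Hom2.
Variable i : 'I_n.
Hypothesis hi : ((val i).+1 < n)%N.

Lemma ab_of (k : 'I_n) : k != i -> k != up i ->
  exists a' b' : 'I_n.-1, [/\ lift k a' = i, lift k b' = up i & val b' = (val a').+1].
Proof.
move=> ki ku.
case: (unliftP k i) => [a' ea|e]; last by move: ki; rewrite e eqxx.
case: (unliftP k (up i)) => [b' eb|e]; last by move: ku; rewrite e eqxx.
exists a', b'; split => //.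
have ki' : val k != val i := ki.
have ku' : val k != (val i).+1 by rewrite -(val_up hi).
move: (congr1 val ea) (congr1 val eb) ki' ku'; rewrite !vlift /bump (val_up hi); nlia.
Qed.

Lemma perm_eq_inv m (w : 'S_m) r x : (w r == x) = (r == (w^-1)%g x).
Proof. by apply/eqP/eqP => [<-|->]; rewrite ?permK ?permKV. Qed.

Lemma Ek_other (k : 'I_n) : k != i -> k != up i ->
  \sum_(w : 'S_(n.-1)) ((- q) ^+ coxeter_length w) *:: tE_basis q i 1 (place (omit k) w) = 0.
Proof.
move=> ki ku; case: (ab_of ki ku) => a' [b' [ea eb hab]].
have nab : a' != b' by apply/negP => /eqP e; move: hab; rewrite e; nlia.
have hG : forall w : 'S_(n.-1), tbasis R (replace (place (omit k) (w * tperm a' b')%g) [set ((w * tperm a' b')^-1)%g b'] i) = tbasis R (replace (place (omit k) w) [set (w^-1)%g b'] i).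
  move=> w; congr (tbasis R _); apply: eq_from_tnth => r.
  rewrite !tnth_replace !in_set1 !tnth_place !tnth_omit permM.
  case: (inv_ws a' b' w) => _ ->.
  have nba : b' != a' by rewrite eq_sym.
  rewrite -!perm_eq_inv.
  case: (tpermP a' b' (w r)) => [e|e|n1 n2].
  - by rewrite e eqxx (negbTE nab) ea.
  - by rewrite e eqxx (negbTE nba).
  - by rewrite (introF eqP n1) (introF eqP n2).
apply: eq_trans (@cancel_sum _ a' b' _ (fun w : 'S_(n.-1) => tbasis R (replace (place (omit k) w) [set (w^-1)%g b'] i)) hab hG).
apply: eq_bigr => w _.
rewrite (@tE_basis1 _ _ _ ((w^-1)%g b')); first last.
- by rewrite tnth_place tnth_omit permKV eb (val_up hi).
- exact: inj_place.
rewrite (eq_bigr (fun r => (nat_of_bool (r == (w^-1)%g a'))%:Z)); last first.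
  move=> r /andP[_]; rewrite in_set1 => nr.
  rewrite /hwt tnth_place tnth_omit -(val_up hi) -[in X in _ - X]eb -ea !val_eqE.
  rewrite !(inj_eq (@lift_inj _ k)) !perm_eq_inv (negbTE nr).
  by rewrite subr0.
rewrite sum_delta in_set1 -perm_eq_inv permKV (negbTE nab) andbT.
by apply/ffunP => x; rewrite !ffunE mulrA.
Qed.

Lemma Fk_other (k : 'I_n) : k != i -> k != up i ->
  \sum_(w : 'S_(n.-1)) ((- q) ^+ coxeter_length w) *:: tF_basis q i 1 (place (omit k) w) = 0.
Proof.
move=> ki ku; case: (ab_of ki ku) => a' [b' [ea eb hab]].
have nab : a' != b' by apply/negP => /eqP e; move: hab; rewrite e; nlia.
have hG : forall w : 'S_(n.-1), tbasis R (replace (place (omit k) (w * tperm a' b')%g) [set ((w * tperm a' b')^-1)%g a'] (up i)) = tbasis R (replace (place (omit k) w) [set (w^-1)%g a'] (up i)).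
  move=> w; congr (tbasis R _); apply: eq_from_tnth => r.
  rewrite !tnth_replace !in_set1 !tnth_place !tnth_omit permM.
  case: (inv_ws a' b' w) => -> _.
  have nba : b' != a' by rewrite eq_sym.
  rewrite -!perm_eq_inv.
  case: (tpermP a' b' (w r)) => [e|e|n1 n2].
  - by rewrite e eqxx (negbTE nab).
  - by rewrite e eqxx (negbTE nba) eb.
  - by rewrite (introF eqP n1) (introF eqP n2).
apply: eq_trans (@cancel_sum _ a' b' _ (fun w : 'S_(n.-1) => tbasis R (replace (place (omit k) w) [set (w^-1)%g a'] (up i))) hab hG).
apply: eq_bigr => w _.
rewrite (@tF_basis1 _ _ _ ((w^-1)%g a')); first last.
- by rewrite tnth_place tnth_omit permKV ea.
- exact: inj_place.
rewrite (eq_bigr (fun r => - (nat_of_bool (r == (w^-1)%g b'))%:Z)); last first.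
  move=> r /andP[_]; rewrite in_set1 => nr.
  rewrite /hwt tnth_place tnth_omit -(val_up hi) -[in X in _ - X]eb -[in X in X - _]ea !val_eqE.
  rewrite !(inj_eq (@lift_inj _ k)) !perm_eq_inv (negbTE nr).
  by rewrite add0r.
rewrite sumrN sum_delta in_set1 -perm_eq_inv permKV eq_sym (negbTE nab) andbT.
by apply/ffunP => x; rewrite !ffunE mulrA.
Qed.

End Hom2.

Lemma ffun0E (T : finType) (x : T) : (0 : {ffun T -> R}) x = 0.
Proof. by rewrite ffunE. Qed.

Lemma scf0 (T : finType) (c : R) : c *:: (0 : {ffun T -> R}) = 0.
Proof. by apply/ffunP => x; rewrite !ffunE mulr0. Qed.

Lemma scf_sumw (T : finType) (I : finType) (c : R) (d : I -> R) (F : I -> {ffun T -> R}) :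
  \sum_w (c * d w) *:: F w = c *:: \sum_w d w *:: F w.
Proof.
apply/ffunP => x; rewrite scfE !sum_ffunE mulr_sumr.
by apply: eq_bigr => w _; rewrite !scfE mulrA.
Qed.

Lemma kappa_vb (c : R) (k0 : 'I_n) : kappa q (c *:: Defs.vbasis R k0) = c *:: kappa_basis q k0.
Proof.
apply/ffunP => x; rewrite sum_ffunE (bigD1 k0) //= [X in _ + X]big1 ?addr0.
  by rewrite !scfE ffunE eqxx mulr1.
by move=> k nk; rewrite !scfE ffunE (negbTE nk) mulr0 mul0r.
Qed.

Lemma kappa_split (i : 'I_n) (hi : ((val i).+1 < n)%N) (B : 'I_n -> tensor n.-1) :
  \sum_k B k = B i + B (up i) + \sum_(k | (k != i) && (k != up i)) B k.
Proof.
rewrite (bigD1 i) //= (bigD1 (up i)) /=; last by rewrite (up_neq hi).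
rewrite addrA; congr (_ + _).
Qed.

Lemma hom_E1 (i : 'I_n) (hi : ((val i).+1 < n)%N) (phi : vec) :
  kappa q (dE q i 1 phi) = tE q i 1 (kappa q phi).
Proof.
have -> : dE q i 1 phi = (- (phi i * q^-1)) *:: Defs.vbasis R (up i).
  apply/ffunP => k; rewrite !ffunE /pairing (bigD1 i) //= [X in _ + X]big1 ?addr0.
    rewrite !ffunE eqxx /hwt (val_up hi) eqxx.
    have -> : ((val i).+1 == val i) = false by apply/negbTE; nlia.
    by rewrite /= sub0r mul1r exprN1 eq_sym; case: (k == up i); rewrite ?mulr0 ?mulr1 ?oppr0 ?mulr0 // mulrN.
  move=> k' nk; rewrite !ffunE; case: eqP => [e|_]; last by rewrite oppr0 mulr0.
  by case/eqP: nk; apply: val_inj.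
rewrite kappa_vb /tE lin_kappa.
under eq_bigr do rewrite !scf_sumw.
rewrite (kappa_split hi) [X in _ + X]big1 ?addr0; last first.
  by move=> k /andP[ki ku]; rewrite Ek_other //; apply/ffunP => x; rewrite !ffunE !mulr0.
have E1 : \sum_(w : 'S_(n.-1)) (- q) ^+ coxeter_length w *:: tE_basis q i 1 (place (omit i) w)
   = \sum_(w : 'S_(n.-1)) (- q) ^+ coxeter_length w *:: tbasis R (place (omit (up i)) w).
  by apply: eq_bigr => w _; rewrite Ek_i.
have E2 : \sum_(w : 'S_(n.-1)) (- q) ^+ coxeter_length w *:: tE_basis q i 1 (place (omit (up i)) w) = 0.
  by apply: big1 => w _; rewrite Ek_up //; apply/ffunP => y; rewrite !ffunE mulr0.
rewrite E1 E2.
rewrite !scf0 addr0.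
apply/ffunP => x; rewrite !scfE.
set S := (X in _ * (_ * X) = _).
rewrite (val_up hi) exprS.
have hqq : q^-1 * q = 1 by rewrite mulVr.
have -> : - (phi i / q) * (- q * (- q) ^+ (val i).+1 * S) =
  phi i * ((- q) ^+ (val i).+1 * S) * (q^-1 * q) by ring.
by rewrite hqq mulr1 mulrA.
Qed.

Lemma hom_F1 (i : 'I_n) (hi : ((val i).+1 < n)%N) (phi : vec) :
  kappa q (dF q i 1 phi) = tF q i 1 (kappa q phi).
Proof.
have -> : dF q i 1 phi = (- (q * phi (up i))) *:: Defs.vbasis R i.
  apply/ffunP => k; rewrite !ffunE /pairing (bigD1 (up i)) //= [X in _ + X]big1 ?addr0.
    rewrite !ffunE (val_up hi) eqxx /hwt.
    rewrite (val_up hi) eqxx.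
    have -> : ((val i).+1 == val i) = false by apply/negbTE; nlia.
    rewrite /= sub0r mulrNN mul1r expr1z eq_sym.
    by case: (k == i); rewrite ?mulr0 ?mulr1 ?oppr0 ?mulr0 // mulrN mulrC.
  move=> k' nk; rewrite !ffunE; case: eqP => [e|_]; last by rewrite mulr0 oppr0 mulr0.
  by case/eqP: nk; apply: val_inj; rewrite e (val_up hi).
rewrite kappa_vb /tF lin_kappa.
under eq_bigr do rewrite !scf_sumw.
rewrite (kappa_split hi) [X in _ + X]big1 ?addr0; last first.
  by move=> k /andP[ki ku]; rewrite Fk_other // scf0 scf0.
have E1 : \sum_(w : 'S_(n.-1)) (- q) ^+ coxeter_length w *:: tF_basis q i 1 (place (omit (up i)) w)
   = \sum_(w : 'S_(n.-1)) (- q) ^+ coxeter_length w *:: tbasis R (place (omit i) w).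
  by apply: eq_bigr => w _; rewrite Fk_up.
have E2 : \sum_(w : 'S_(n.-1)) (- q) ^+ coxeter_length w *:: tF_basis q i 1 (place (omit i) w) = 0.
  by apply: big1 => w _; rewrite Fk_i // scf0.
rewrite E1 E2 !scf0 add0r.
apply/ffunP => x; rewrite !scfE.
rewrite (val_up hi) !exprS; ring.
Qed.

End Pf.

Unset Implicit Arguments.

Theorem lemma2p2 (R : comUnitRingType) (q : R) (n : nat) :
  q \is a GRing.unit -> (0 < n)%N ->
  [/\ (forall (a : R) (phi psi : vec R n),
         @kappa R q n (a *:: phi + psi) = a *:: @kappa R q n phi + @kappa R q n psi),
      is_Uprime_hom q (@kappa R q n) &
      injective (@kappa R q n)].
Proof.
move=> Hq n0; split.
- by move=> a phi psi; apply: kappa_lin.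
- move=> i hi; split.
  + by move=> z phi; apply: hom_K.
  + move=> l phi; case: l => [|[|l]].
    * exact: hom_E0.
    * exact: hom_E1.
    * exact: hom_E2.
  + move=> l phi; case: l => [|[|l]].
    * exact: hom_F0.
    * exact: hom_F1.
    * exact: hom_F2.
- exact: kappa_inj.
Qed.
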